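(* Let $L_1=\langle\mathbf{A}_1,D_1\rangle$ and $L_2=\langle\mathbf{A}_2,D_2\rangle$ be two matrix logics over the same propositional signature such that $\mathbf{A}_2$ is a subalgebra of $\mathbf{A}_1$ and $D_2=D_1\cap A_2$. Suppose there is a formula $\circ'(p)$ depending on a single propositional variable $p$ such that, for every valuation $\vartheta$ over $L_1$ and every formula $\alpha$, $\vartheta(\circ'\alpha)\in D_1$ iff $\vartheta(\alpha)\in A_2$. Then for every set of formulas $\Gamma$ and formula $\alpha$: $\circ'(Var(\Gamma\cup\{\alpha\})),\Gamma\vdash_{L_1}\alpha$ iff $\Gamma\vdash_{L_2}\alpha$, where $\circ'(X)=\{\circ'(p): p\in X\}$ for a set $X$ of propositional variables.
   Context: A matrix logic $\langle\mathbf{A},D\rangle$ consists of an algebra $\mathbf{A}$ of the signature and a set $D\subseteq A$ of designated values; a valuation is a homomorphism from the formula algebra into $\mathbf{A}$, and $\Gamma\vdash\alpha$ iff every valuation $\vartheta$ with $\vartheta[\Gamma]\subseteq D$ has $\vartheta(\alpha)\in D$. $Var(\Delta)$ is the set of propositional variables occurring in the formulas of $\Delta$; $\circ'\alpha$ denotes the result of substituting $\alpha$ for $p$ in $\circ'(p)$. *)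

(* Defs.v *)
From mathcomp Require Import all_boot.
Set Implicit Arguments. Unset Strict Implicit. Unset Printing Implicit Defensive.

Record signature := Signature { sym : Type; arity : sym -> nat }.

Inductive formula (S : signature) : Type :=
| Var : nat -> formula S
| App : forall c : sym S, ('I_(arity c) -> formula S) -> formula S.
Arguments Var {S} _.
Arguments App {S} _ _.

Record algebra (S : signature) := Algebra {
  carrier :> Type;
  op : forall c : sym S, ('I_(arity c) -> carrier) -> carrier }.
Arguments op {S} _ _ _.

(* Valuations: homomorphisms from the formula algebra, i.e. the unique
   homomorphic extension of an assignment of the variables. *)
Fixpoint eval (S : signature) (A : algebra S) (v : nat -> A) (f : formula S) : A :=
  match f with
  | Var n => v n
  | App c args => op A c (fun i => eval v (args i))
  end.

Record matrix (S : signature) := Matrix { alg : algebra S; designated : alg -> Prop }.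
Arguments alg {S} _.
Arguments designated {S} _ _.

Definition entails (S : signature) (L : matrix S) (Gamma : formula S -> Prop)
  (a : formula S) : Prop :=
  forall v : nat -> alg L,
    (forall g, Gamma g -> designated L (eval v g)) -> designated L (eval v a).

Definition closed_sub (S : signature) (A : algebra S) (P : A -> Prop) : Prop :=
  forall c (xs : 'I_(arity c) -> A), (forall i, P (xs i)) -> P (op A c xs).

Definition subalgebra (S : signature) (A : algebra S) (P : A -> Prop)
  (HP : closed_sub P) : algebra S :=
  @Algebra S {x : A | P x}
    (fun c xs => exist P (op A c (fun i => proj1_sig (xs i)))
                   (HP c _ (fun i => proj2_sig (xs i)))).

(* The matrix <A2, D1 ∩ A2> with A2 the subalgebra with universe P. *)
Definition submatrix (S : signature) (L : matrix S) (P : alg L -> Prop)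
  (HP : closed_sub P) : matrix S :=
  @Matrix S (subalgebra HP) (fun x => designated L (proj1_sig x)).

Fixpoint occurs (S : signature) (q : nat) (f : formula S) : Prop :=
  match f with
  | Var r => q = r
  | App c args => exists i, occurs q (args i)
  end.

Fixpoint subst1 (S : signature) (p : nat) (b : formula S) (f : formula S) : formula S :=
  match f with
  | Var r => if r == p then b else Var r
  | App c args => App c (fun i => subst1 p b (args i))
  end.

(* Main.v *)
Require Import Defs.
From mathcomp Require Import all_boot.
From Stdlib Require Import FunctionalExtensionality ClassicalEpsilon.

Lemma eval_sub (S : signature) (L1 : matrix S) (A2 : alg L1 -> Prop)
  (HA2 : closed_sub A2) (v1 : nat -> alg L1) (v2 : nat -> subalgebra HA2) (f : formula S) :
  (forall q, occurs q f -> proj1_sig (v2 q) = v1 q) ->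
  proj1_sig (@eval S (subalgebra HA2) v2 f) = eval v1 f.
Proof.
  induction f as [r|c args IH]; simpl; intros H.
  - by apply H.
  - f_equal; apply functional_extensionality => i.
    apply IH => q Hq; apply H; by exists i.
Qed.

Lemma eval_in (S : signature) (A : algebra S) (P : A -> Prop) (HP : closed_sub P)
  (v : nat -> A) (f : formula S) :
  (forall q, occurs q f -> P (v q)) -> P (eval v f).
Proof.
  induction f as [r|c args IH]; simpl; intros H.
  - by apply H.
  - apply HP => i; apply IH => q Hq; apply H; by exists i.
Qed.

Theorem theorem19 (S : signature) (L1 : matrix S) (A2 : alg L1 -> Prop)
  (HA2 : closed_sub A2) (p : nat) (circ : formula S)
  (Hcirc_var : forall q, occurs q circ -> q = p)
  (Hcirc : forall (v : nat -> alg L1) (a : formula S),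
      designated L1 (eval v (subst1 p a circ)) <-> A2 (eval v a)) :
  forall (Gamma : formula S -> Prop) (a : formula S),
    entails L1
      (fun g => (exists q, (occurs q a \/ exists g', Gamma g' /\ occurs q g')
                           /\ g = subst1 p (Var q) circ)
                \/ Gamma g) a
    <-> entails (submatrix HA2) Gamma a.
Proof.
  move=> Gamma a; split.
  - move=> H v2 HG.
    pose v1 := fun q => proj1_sig (v2 q).
    have E : forall f, proj1_sig (@eval S (subalgebra HA2) v2 f) = eval v1 f.
      by move=> f; apply eval_sub.
    rewrite /= E; apply H => g [[q [_ ->]]|Hg].
    + apply/Hcirc => /=. exact: proj2_sig (v2 q).
    + move: (HG g Hg) => /=. by rewrite E.
  - move=> H v1 HG.
    have Hv : forall q, (occurs q a \/ exists g', Gamma g' /\ occurs q g') -> A2 (v1 q).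
      move=> q Hq. have := HG (subst1 p (Var q) circ) (or_introl (ex_intro _ q (conj Hq erefl))).
      by move/Hcirc.
    have Ha : A2 (eval v1 a) by apply: (@eval_in S (alg L1) A2 HA2) => q Hq; apply Hv; left.
    pose d : subalgebra HA2 := exist A2 (eval v1 a) Ha.
    pose v2 : nat -> subalgebra HA2 := fun q =>
      match excluded_middle_informative (A2 (v1 q)) with
      | left h => exist A2 (v1 q) h
      | right _ => d end.
    have Ev : forall q, A2 (v1 q) -> proj1_sig (v2 q) = v1 q.
      move=> q h; rewrite /v2; by case: excluded_middle_informative.
    have := H v2.
    rewrite /= (@eval_sub S L1 A2 HA2 v1 v2 a); last first.
      by move=> q Hq; apply Ev, Hv; left.
    apply => g Hg /=.
    rewrite (@eval_sub S L1 A2 HA2 v1 v2 g); last first.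
      by move=> q Hq; apply Ev, Hv; right; exists g.
    by apply HG; right.
Qed.
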